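(* There exist infinitely many (pairwise non-isomorphic) planar graphs $G$ with $\chi_1(G) = 3$.
   Context: All graphs are finite and simple. A mapping $f : V(G) \to E(G) \cup \{\emptyset\}$ is a $1$-selection of $G$ if for every $v \in V(G)$ either $f(v)$ is an edge incident with $v$ or $f(v) = \emptyset$. The graph $G_f$ is obtained from $G$ by deleting all edges in $f(V(G))$. The robust chromatic number is $\chi_1(G) = \min_f \chi(G_f)$, the minimum over all $1$-selections $f$ of $G$ of the chromatic number of $G_f$. *)

(* Defs.v *)
From mathcomp Require Import all_boot.
From Stdlib Require Import Reals.

Record sgraph := SGraph {
  vert :> finType;
  adj : rel vert;
  adj_sym : symmetric adj;
  adj_irr : irreflexive adj }.

Set Implicit Arguments.
Unset Strict Implicit.
Unset Printing Implicit Defensive.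

Definition isomorphic (G H : sgraph) : Prop :=
  exists phi : vert G -> vert H,
    bijective phi /\ forall u v, adj H (phi u) (phi v) = adj G u v.

Local Open Scope R_scope.

Definition arc (g : R -> R * R) : Prop :=
  continuity (fun t => fst (g t)) /\ continuity (fun t => snd (g t)) /\
  (forall s t, 0 <= s <= 1 -> 0 <= t <= 1 -> g s = g t -> s = t).

Definition plane_embedding (G : sgraph) (p : G -> R * R)
    (g : G -> G -> R -> R * R) : Prop :=
  injective p /\
  (forall u v, adj G u v ->
     arc (g u v) /\ g u v 0 = p u /\ g u v 1 = p v /\
     (forall t, g v u t = g u v (1 - t))) /\
  (forall u v w t, adj G u v -> 0 < t < 1 -> g u v t <> p w) /\
  (forall u v u' v' s t, adj G u v -> adj G u' v' ->
     ~ ((u = u' /\ v = v') \/ (u = v' /\ v = u')) ->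
     0 < s < 1 -> 0 < t < 1 -> g u v s <> g u' v' t).

Definition planar (G : sgraph) : Prop :=
  exists p g, @plane_embedding G p g.

Local Close Scope R_scope.

(* A 1-selection: f v = Some w means f(v) is the edge vw (incident with v);
   f v = None means f(v) = emptyset. *)
Definition one_selection (G : sgraph) (f : G -> option G) : Prop :=
  forall v w, f v = Some w -> adj G v w.

Definition adj_del (G : sgraph) (f : G -> option G) : rel G :=
  fun u w => adj G u w && ~~ ((f u == Some w) || (f w == Some u)).

Definition proper_coloring (V : finType) (r : rel V) (k : nat)
    (c : V -> 'I_k) : Prop :=
  forall u w, r u w -> c u <> c w.

Definition colorable (V : finType) (r : rel V) (k : nat) : Prop :=
  exists c : V -> 'I_k, proper_coloring r c.

Definition chromatic_number (V : finType) (r : rel V) (k : nat) : Prop :=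
  colorable r k /\ forall j, colorable r j -> k <= j.

Definition robust_chromatic_number (G : sgraph) (k : nat) : Prop :=
  (exists f : G -> option G, one_selection f /\ chromatic_number (adj_del f) k) /\
  (forall (f : G -> option G) j, one_selection f -> chromatic_number (adj_del f) j -> k <= j).

(* Main.v *)
Require Import Defs.
From mathcomp Require Import all_boot.
From Stdlib Require Import Reals.
From Stdlib Require Import ZArith Lra Lia.
From mathcomp Require Import zify.

Set Implicit Arguments.
Unset Strict Implicit.
Unset Printing Implicit Defensive.

Definition EL : seq (nat * nat) := [:: (0,1); (0,2); (0,3); (0,4); (0,5); (0,6); (0,7); (0,11); (0,23); (0,24); (0,25); (0,26); (0,27); (0,28); (0,29); (0,33); (0,45); (0,46); (0,47); (0,48); (0,49); (0,50); (0,51); (0,55); (0,67); (0,68); (0,69); (1,2); (1,3); (1,4); (1,9); (1,10); (1,11); (1,12); (1,13); (1,14); (1,18); (1,26); (1,31); (1,32); (1,33); (1,34); (1,35); (1,36); (1,40); (2,3); (2,4); (2,16); (2,17); (2,18); (2,19); (2,20); (2,21); (2,25); (2,48); (2,53); (2,54); (2,55); (2,56); (2,57); (2,58); (2,62); (3,26); (3,38); (3,39); (3,40); (3,41); (3,42); (3,43); (3,47); (3,48); (3,60); (3,61); (3,62); (3,63); (3,64); (3,65); (3,69); (4,7); (4,10); (4,14); (4,17); (4,21); (4,24); (5,6); (5,8); (5,9); (5,11); (6,7); (6,8); (7,8); (7,10); (8,9); (8,10); (9,10); (9,11); (12,13); (12,15); (12,16); (12,18); (13,14); (13,15); (14,15);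 (14,17); (15,16); (15,17); (16,17); (16,18); (19,20); (19,22); (19,23); (19,25); (20,21); (20,22); (21,22); (21,24); (22,23); (22,24); (23,24); (23,25); (26,29); (26,32); (26,36); (26,39); (26,43); (26,46); (27,28); (27,30); (27,31); (27,33); (28,29); (28,30); (29,30); (29,32); (30,31); (30,32); (31,32); (31,33); (34,35); (34,37); (34,38); (34,40); (35,36); (35,37); (36,37); (36,39); (37,38); (37,39); (38,39); (38,40); (41,42); (41,44); (41,45); (41,47); (42,43); (42,44); (43,44); (43,46); (44,45); (44,46); (45,46); (45,47); (48,51); (48,54); (48,58); (48,61); (48,65); (48,68); (49,50); (49,52); (49,53); (49,55); (50,51); (50,52); (51,52); (51,54); (52,53); (52,54); (53,54); (53,55); (56,57); (56,59); (56,60); (56,62); (57,58); (57,59); (58,59); (58,61); (59,60); (59,61); (60,61); (60,62); (63,64); (63,66); (63,67); (63,69); (64,65); (64,66); (65,66); (65,68); (66,67); (66,68); (67,68); (67,69)].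
Definition XF0 : seq (nat * nat * nat) := [:: (5,6,8); (0,5,6); (5,8,9); (5,9,11); (0,5,11); (6,7,8); (0,6,7); (7,8,10); (4,7,10); (0,4,7); (8,9,10); (1,9,10); (1,9,11); (1,4,10); (0,1,11)].
Definition XF1 : seq (nat * nat * nat) := [:: (12,13,15); (1,12,13); (12,15,16); (12,16,18); (1,12,18); (13,14,15); (1,13,14); (14,15,17); (4,14,17); (1,4,14); (15,16,17); (2,16,17); (2,16,18); (2,4,17); (1,2,18)].
Definition XF2 : seq (nat * nat * nat) := [:: (19,20,22); (2,19,20); (19,22,23); (19,23,25); (2,19,25); (20,21,22); (2,20,21); (21,22,24); (4,21,24); (2,4,21); (22,23,24); (0,23,24); (0,23,25); (0,4,24); (0,2,25)].
Definition XF3 : seq (nat * nat * nat) := [:: (27,28,30); (0,27,28); (27,30,31); (27,31,33); (0,27,33); (28,29,30); (0,28,29); (29,30,32); (26,29,32); (0,26,29); (30,31,32); (1,31,32); (1,31,33); (1,26,32); (0,1,33)].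
Definition XF4 : seq (nat * nat * nat) := [:: (34,35,37); (1,34,35); (34,37,38); (34,38,40); (1,34,40); (35,36,37); (1,35,36); (36,37,39); (26,36,39); (1,26,36); (37,38,39); (3,38,39); (3,38,40); (3,26,39); (1,3,40)].
Definition XF5 : seq (nat * nat * nat) := [:: (41,42,44); (3,41,42); (41,44,45); (41,45,47); (3,41,47); (42,43,44); (3,42,43); (43,44,46); (26,43,46); (3,26,43); (44,45,46); (0,45,46); (0,45,47); (0,26,46); (0,3,47)].
Definition XF6 : seq (nat * nat * nat) := [:: (49,50,52); (0,49,50); (49,52,53); (49,53,55); (0,49,55); (50,51,52); (0,50,51); (51,52,54); (48,51,54); (0,48,51); (52,53,54); (2,53,54); (2,53,55); (2,48,54); (0,2,55)].
Definition XF7 : seq (nat * nat * nat) := [:: (56,57,59); (2,56,57); (56,59,60); (56,60,62); (2,56,62); (57,58,59); (2,57,58); (58,59,61); (48,58,61); (2,48,58); (59,60,61); (3,60,61); (3,60,62); (3,48,61); (2,3,62)].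
Definition XF8 : seq (nat * nat * nat) := [:: (63,64,66); (3,63,64); (63,66,67); (63,67,69); (3,63,69); (64,65,66); (3,64,65); (65,66,68); (48,65,68); (3,48,65); (66,67,68); (0,67,68); (0,67,69); (0,48,68); (0,3,69)].
Definition YF0 : seq (nat * nat * nat) := XF0 ++ XF1 ++ XF2.
Definition YF1 : seq (nat * nat * nat) := XF3 ++ XF4 ++ XF5.
Definition YF2 : seq (nat * nat * nat) := XF6 ++ XF7 ++ XF8.
Definition FL : seq (nat * nat * nat) := YF0 ++ YF1 ++ YF2 ++ [:: (1,2,3)].
Definition CX : seq Z := [:: 45668%Z; 0%Z; 100000%Z; 37000%Z; 48558%Z; 32969%Z; 37354%Z; 38500%Z; 32270%Z; 23904%Z; 28644%Z; 25631%Z; 34787%Z; 27958%Z; 34983%Z; 42057%Z; 56190%Z; 56354%Z; 47743%Z; 77910%Z; 80361%Z; 72183%Z; 71341%Z; 65570%Z; 60664%Z; 72288%Z; 27554%Z; 30299%Z; 33619%Z; 31116%Z; 27406%Z; 20638%Z; 21341%Z; 24152%Z; 14089%Z; 12050%Z; 16315%Z; 17782%Z; 22281%Z; 24185%Z; 18340%Z; 38278%Z; 36999%Z; 35231%Z; 37481%Z; 39746%Z; 37135%Z; 40176%Z; 60889%Z; 63149%Z; 58875%Z; 60755%Z; 65926%Z; 74458%Z; 72405%Z; 70819%Z; 77000%Z; 80873%Z; 74964%Z; 71532%Z; 63276%Z; 61534%Z; 69320%Z; 42514%Z; 42917%Z; 46949%Z; 45210%Z; 44931%Z; 48732%Z;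 42525%Z].
Definition CY : seq Z := [:: 33332%Z; 0%Z; 7000%Z; 93000%Z; 13443%Z; 21268%Z; 23358%Z; 20371%Z; 18459%Z; 14031%Z; 13262%Z; 17155%Z; 3711%Z; 3744%Z; 5980%Z; 5270%Z; 5493%Z; 7441%Z; 4052%Z; 15353%Z; 13239%Z; 13982%Z; 16607%Z; 20808%Z; 19636%Z; 19123%Z; 42108%Z; 24907%Z; 28451%Z; 30443%Z; 25101%Z; 18484%Z; 23230%Z; 19184%Z; 31965%Z; 25458%Z; 31465%Z; 38405%Z; 51781%Z; 51352%Z; 44186%Z; 69459%Z; 72427%Z; 64423%Z; 62826%Z; 56063%Z; 51750%Z; 62963%Z; 44446%Z; 27208%Z; 30216%Z; 32517%Z; 27799%Z; 22255%Z; 26806%Z; 22446%Z; 36374%Z; 30276%Z; 35572%Z; 42165%Z; 54649%Z; 53965%Z; 47754%Z; 69755%Z; 72843%Z; 65242%Z; 63364%Z; 56427%Z; 52563%Z; 63130%Z].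
Definition XD : seq (seq nat * seq nat * nat * nat * seq (nat * nat * nat) * seq (seq nat)) := [:: ([:: 5; 6; 7; 8; 9; 10; 0; 1; 11; 4], [:: 5; 6; 7; 8; 9; 10; 11], 0, 1, XF0, [:: [:: 6]; [:: 11]; [:: 5; 6; 11]; [:: 6; 8; 9; 11]; [:: 9; 11]; [:: 5; 11]; [:: 5; 6; 7; 10; 11]; [:: 6; 7; 9; 10; 11]]); ([:: 12; 13; 14; 15; 16; 17; 1; 2; 18; 4], [:: 12; 13; 14; 15; 16; 17; 18], 1, 2, XF1, [:: [:: 13]; [:: 18]; [:: 12; 13; 18]; [:: 13; 15; 16; 18]; [:: 16; 18]; [:: 12; 18]; [:: 12; 13; 14; 17; 18]; [:: 13; 14; 16; 17; 18]]); ([:: 19; 20; 21; 22; 23; 24; 2; 0; 25; 4], [:: 19; 20; 21; 22; 23; 24; 25], 2, 0, XF2, [:: [:: 20]; [:: 25]; [:: 19; 20; 25]; [:: 20; 22; 23; 25]; [:: 23; 25]; [:: 19; 25]; [:: 19; 20; 21; 24; 25]; [:: 20; 21; 23; 24; 25]]); ([:: 27; 28; 29; 30; 31; 32; 0; 1; 33; 26], [:: 27; 28; 29; 30; 31; 32; 33], 0, 1, XF3, [:: [:: 28]; [:: 33]; [:: 27; 28; 33]; [:: 28; 30; 31; 33]; [:: 31; 33]; [:: 27; 33]; [:: 27; 28; 29; 32; 33]; [:: 28; 29; 31; 32; 33]]); ([:: 34; 35; 36; 37; 38; 39; 1; 3; 40; 26], [:: 34; 35; 36; 37; 38; 39; 40],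 1, 3, XF4, [:: [:: 35]; [:: 40]; [:: 34; 35; 40]; [:: 35; 37; 38; 40]; [:: 38; 40]; [:: 34; 40]; [:: 34; 35; 36; 39; 40]; [:: 35; 36; 38; 39; 40]]); ([:: 41; 42; 43; 44; 45; 46; 3; 0; 47; 26], [:: 41; 42; 43; 44; 45; 46; 47], 3, 0, XF5, [:: [:: 42]; [:: 47]; [:: 41; 42; 47]; [:: 42; 44; 45; 47]; [:: 45; 47]; [:: 41; 47]; [:: 41; 42; 43; 46; 47]; [:: 42; 43; 45; 46; 47]]); ([:: 49; 50; 51; 52; 53; 54; 0; 2; 55; 48], [:: 49; 50; 51; 52; 53; 54; 55], 0, 2, XF6, [:: [:: 50]; [:: 55]; [:: 49; 50; 55]; [:: 50; 52; 53; 55]; [:: 53; 55]; [:: 49; 55]; [:: 49; 50; 51; 54; 55]; [:: 50; 51; 53; 54; 55]]); ([:: 56; 57; 58; 59; 60; 61; 2; 3; 62; 48], [:: 56; 57; 58; 59; 60; 61; 62], 2, 3, XF7, [:: [:: 57]; [:: 62]; [:: 56; 57; 62]; [:: 57; 59; 60; 62]; [:: 60; 62]; [:: 56; 62]; [:: 56; 57; 58; 61; 62]; [:: 57; 58; 60; 61; 62]]); ([:: 63; 64; 65; 66; 67; 68; 3; 0; 69; 48], [:: 63; 64; 65; 66; 67; 68; 69], 3, 0, XF8, [:: [:: 64]; [:: 69]; [:: 63; 64; 69]; [:: 64; 66; 67; 69]; [:: 67; 69]; [:: 63; 69]; [:: 63; 64; 65; 68; 69]; [:: 64; 65; 67; 68;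 69]])].
Definition COL3 : seq nat := [:: 1; 1; 2; 0; 0; 0; 1; 0; 2; 1; 2; 2; 0; 0; 1; 0; 2; 0; 1; 1; 0; 1; 0; 1; 0; 2; 2; 0; 2; 2; 1; 2; 2; 2; 0; 0; 0; 1; 2; 1; 2; 2; 1; 1; 0; 0; 1; 0; 0; 2; 0; 1; 2; 0; 1; 1; 0; 2; 0; 0; 1; 1; 2; 1; 1; 2; 2; 2; 1; 1].
Definition FSEL : seq (option nat) := [:: Some 69; Some 0; Some 62; Some 48; Some 17; None; Some 0; Some 4; Some 10; Some 1; None; None; Some 13; Some 15; Some 1; Some 12; Some 2; Some 15; Some 1; Some 23; Some 22; None; Some 24; Some 0; Some 4; Some 2; Some 29; None; Some 29; Some 32; None; Some 32; Some 26; Some 31; Some 35; Some 36; None; Some 39; Some 40; None; None; None; Some 43; Some 46; Some 45; Some 47; Some 0; Some 3; Some 58; Some 52; None; Some 0; None; None; Some 51; Some 0; Some 59; Some 2; Some 59; None; Some 61; None; None; Some 69; Some 63; Some 66; Some 67; None; Some 0; None].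

Definition NN := 70.

Definition mono (c : nat -> bool) (e : nat * nat) : bool := c e.1 == c e.2.
Definition sel (fs : nat -> option nat) (e : nat * nat) : nat :=
  if fs e.1 == Some e.2 then e.1 else e.2.
Definition oth (fs : nat -> option nat) (e : nat * nat) : nat :=
  if fs e.1 == Some e.2 then e.2 else e.1.
Definition free c fs (v : nat) : bool :=
  ~~ has (fun e => mono c e && (sel fs e == v)) EL.
Definition Hsel (c : nat -> bool) (fs : nat -> option nat) : Prop :=
  forall e, e \in EL -> mono c e -> fs e.1 = Some e.2 \/ fs e.2 = Some e.1.
Definition Ecnt c (S : seq nat) :=
  count (fun e => mono c e && (e.1 \in S) && (e.2 \in S)) EL.
Definition closed c (S : seq nat) :=
  all (fun e => ((e.1 \in S) != (e.2 \in S)) ==> ~~ mono c e) EL.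
Definition fedges (f : nat * nat * nat) : seq (nat * nat) :=
  let: (a, b, d) := f in [:: (a, b); (a, d); (b, d)].
Definition monoface (c : nat -> bool) (f : nat * nat * nat) : bool :=
  let: (a, b, d) := f in (c a == c b) && (c b == c d).
Definition mf c f := count (mono c) (fedges f).

Lemma EL_ok : all (fun e => (e.1 < e.2) && (e.2 < NN)) EL.
Proof. by vm_compute. Qed.
Lemma EL_uniq : uniq EL.
Proof. by vm_compute. Qed.

Lemma EL_lt e : e \in EL -> e.1 < e.2.
Proof. by move=> /(allP EL_ok) /andP[]. Qed.
Lemma EL_bnd e : e \in EL -> e.2 < NN.
Proof. by move=> /(allP EL_ok) /andP[]. Qed.

Lemma sel_spec c fs e : Hsel c fs -> e \in EL -> mono c e -> fs (sel fs e) = Some (oth fs e).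
Proof.
move=> H eE me; rewrite /sel /oth; case: eqP => // Hn.
by case: (H e eE me).
Qed.

Lemma sel_inj c fs : Hsel c fs -> {in filter (mono c) EL &, injective (sel fs)}.
Proof.
move=> H e e'; rewrite !mem_filter => /andP[me eE] /andP[me' eE'] Heq.
have s1 := sel_spec H eE me; have s2 := sel_spec H eE' me'.
rewrite Heq s2 in s1; case: s1 => Ho.
have l1 := EL_lt eE; have l2 := EL_lt eE'.
move: Heq Ho l1 l2; rewrite /sel /oth.
case: e {eE me s2} => a b; case: e' {eE' me'} => a' b' /=.
case: (fs a == Some b); case: (fs a' == Some b') => /= E1 E2 l1 l2.
all: try (by rewrite E1 E2).
all: try lia.
Qed.

Lemma count_mono_le c fs : Hsel c fs ->
  count (mono c) EL <= NN - count (free c fs) (iota 0 NN).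
Proof.
move=> H.
have U : uniq (map (sel fs) (filter (mono c) EL)).
  by rewrite map_inj_in_uniq ?filter_uniq ?EL_uniq //; exact: sel_inj.
have Sub : {subset map (sel fs) (filter (mono c) EL) <= filter (predC (free c fs)) (iota 0 NN)}.
  move=> x /mapP[e]; rewrite mem_filter => /andP[me eE] ->.
  rewrite mem_filter mem_iota /=; apply/andP; split.
    rewrite /free negbK; apply/hasP; exists e => //; by rewrite me eqxx.
  have l1 := EL_lt eE; have l2 := EL_bnd eE.
  rewrite /sel /NN in l2 *; case: ifP => _ /=; [exact: ltn_trans l1 l2 | exact: l2].
have h2 := uniq_leq_size U Sub; rewrite size_map in h2.
have e3 : size [seq x <- iota 0 NN | predC (free c fs) x] = count (predC (free c fs)) (iota 0 NN) := size_filter _ _.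
rewrite e3 size_filter in h2.
have h1 := count_predC (free c fs) (iota 0 NN); rewrite size_iota in h1.
rewrite /NN in h1 h2 *. lia.
Qed.

Lemma faces_perm : perm_eq (flatten (map fedges FL)) (EL ++ EL).
Proof. by vm_compute. Qed.
Lemma FL_size : size FL = 136.
Proof. by vm_compute. Qed.

Lemma sum_mf c : sumn (map (mf c) FL) = 2 * count (mono c) EL.
Proof.
have -> : sumn (map (mf c) FL) = count (mono c) (flatten (map fedges FL)).
  rewrite /mf; elim: FL => //= f l ->; by rewrite count_cat.
by rewrite (permP faces_perm) count_cat mul2n -addnn.
Qed.

Lemma mf_ge c f : 1 + 2 * monoface c f <= mf c f.
Proof.
case: f => [[a b] d]; rewrite /mf /monoface /mono /=.
by case: (c a); case: (c b); case: (c d).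
Qed.

Lemma sum_mf_ge c (l : seq (nat * nat * nat)) :
  size l + 2 * count (monoface c) l <= sumn (map (mf c) l).
Proof.
elim: l => //= f l IH; have := mf_ge c f; lia.
Qed.

Lemma closed_free c fs S : Hsel c fs -> uniq S -> closed c S -> Ecnt c S < size S ->
  has (free c fs) S.
Proof.
move=> H U Cl Lt; apply/negPn/negP => Hn.
have Sub : {subset S <= map (sel fs) (filter (fun e => mono c e && (e.1 \in S) && (e.2 \in S)) EL)}.
  move=> v vS.
  have : ~~ free c fs v by apply: contra Hn => fv; apply/hasP; exists v.
  rewrite /free negbK => /hasP[e eE /andP[me /eqP se]].
  apply/mapP; exists e => //; rewrite mem_filter eE me andbT /=.
  have Ce := allP Cl e eE; rewrite me /= in Ce.
  move: se; rewrite /sel; case: ifP => _ se; rewrite -se in vS; move: Ce; rewrite vS /=;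
    by case: (_ \in S).
have := uniq_leq_size U Sub; rewrite size_map size_filter -/(Ecnt c S); lia.
Qed.

Definition dL (d : seq nat * seq nat * nat * nat * seq (nat * nat * nat) * seq (seq nat)) := d.1.1.1.1.1.
Definition dI (d : seq nat * seq nat * nat * nat * seq (nat * nat * nat) * seq (seq nat)) := d.1.1.1.1.2.
Definition dx (d : seq nat * seq nat * nat * nat * seq (nat * nat * nat) * seq (seq nat)) := d.1.1.1.2.
Definition dy (d : seq nat * seq nat * nat * nat * seq (nat * nat * nat) * seq (seq nat)) := d.1.1.2.
Definition dF (d : seq nat * seq nat * nat * nat * seq (nat * nat * nat) * seq (seq nat)) := d.1.2.
Definition dC (d : seq nat * seq nat * nat * nat * seq (nat * nat * nat) * seq (seq nat)) := d.2.

Definition ELX (L : seq nat) := filter (fun e => (e.1 \in L) && (e.2 \in L)) EL.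
Definition tri (f : nat * nat * nat) : seq nat := let: (a, b, d) := f in [:: a; b; d].
Definition lmono (bs : seq bool) (e : nat * nat) := nth false bs e.1 == nth false bs e.2.
Definition lface (bs : seq bool) (f : seq nat) :=
  (nth false bs (nth 0 f 0) == nth false bs (nth 0 f 1)) &&
  (nth false bs (nth 0 f 1) == nth false bs (nth 0 f 2)).
Definition lclosed bs (el : seq (nat * nat)) (S : seq nat) :=
  all (fun e => ((e.1 \in S) != (e.2 \in S)) ==> ~~ lmono bs e) el.
Definition lcnt bs (el : seq (nat * nat)) (S : seq nat) :=
  count (fun e => lmono bs e && (e.1 \in S) && (e.2 \in S)) el.
Definition loc (L : seq nat) (v : nat) := index v L.
Definition locE (L : seq nat) (e : nat * nat) := (loc L e.1, loc L e.2).

Definition chkX d :=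
  let L := dL d in
  let el := map (locE L) (ELX L) in
  let fl := map (fun f => map (loc L) (tri f)) (dF d) in
  let cs := map (map (loc L)) (dC d) in
  let xi := loc L (dx d) in let yi := loc L (dy d) in
  fun bs => (nth false bs xi != nth false bs yi) || has (lface bs) fl ||
    has (fun S => lclosed bs el S && (lcnt bs el S < size S)) cs.

Fixpoint allbs (n : nat) : seq (seq bool) :=
  if n is n'.+1 then map (cons true) (allbs n') ++ map (cons false) (allbs n') else [:: [::]].

Lemma allbs_mem n bs : size bs = n -> bs \in allbs n.
Proof.
elim: n bs => [|n IH] [|b bs] //= [Hs].
rewrite mem_cat; case: b; [apply/orP; left | apply/orP; right];
  by apply: map_f; apply: IH.
Qed.

Lemma XD_chk : all (fun d => all (chkX d) (allbs 10)) XD.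
Proof. by vm_compute. Qed.

Definition dok d :=
  [&& size (dL d) == 10, (dx d \in dL d), (dy d \in dL d),
      all (fun f => all (fun v => v \in dL d) (tri f)) (dF d),
      all (fun v => v \in dL d) (dI d),
      all (fun S => uniq S && all (fun v => v \in dI d) S) (dC d) &
      all (fun e => ((e.1 \in dI d) || (e.2 \in dI d)) ==> ((e.1 \in dL d) && (e.2 \in dL d))) EL].

Lemma XD_ok : all dok XD.
Proof. by vm_compute. Qed.

Lemma locC L c v : v \in L -> nth false (map c L) (loc L v) = c v.
Proof.
move=> vL; rewrite /loc (nth_map v) ?index_mem // nth_index //.
Qed.

Lemma loc_mem L (S : seq nat) v : v \in L -> {subset S <= L} ->
  (loc L v \in map (loc L) S) = (v \in S).
Proof.
move=> vL SL; apply/mapP/idP => [[w wS E]|vS]; last by exists v.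
have wL := SL w wS.
have : nth 0 L (loc L v) = nth 0 L (loc L w) by rewrite E.
by rewrite /loc !nth_index // => ->.
Qed.

Lemma Xface (L : seq nat) c (F : seq (nat * nat * nat)) :
  all (fun f => all (fun v => v \in L) (tri f)) F ->
  has (lface (map c L)) (map (fun f => map (loc L) (tri f)) F) -> has (monoface c) F.
Proof.
move=> FL' /hasP[f' /mapP[f fF ->] mfc]; apply/hasP; exists f => //.
move: (allP FL' f fF) mfc; case: f {fF} => [[a b] d'] /= /and4P[aL bL dL' _].
by rewrite /lface /= !locC.
Qed.

Lemma XME (L : seq nat) c (S : seq nat) e : {subset S <= L} -> e \in ELX L ->
   (lmono (map c L) (locE L e) = mono c e) /\
   ((locE L e).1 \in map (loc L) S) = (e.1 \in S) /\
   ((locE L e).2 \in map (loc L) S) = (e.2 \in S).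
Proof.
move=> SL; rewrite mem_filter => /andP[/andP[e1 e2] _].
by rewrite /lmono /mono /locE /= !locC // !loc_mem.
Qed.

Lemma XCl (L I : seq nat) c (S : seq nat) :
  {subset S <= I} -> {subset S <= L} ->
  all (fun e => ((e.1 \in I) || (e.2 \in I)) ==> ((e.1 \in L) && (e.2 \in L))) EL ->
  lclosed (map c L) (map (locE L) (ELX L)) (map (loc L) S) ->
  closed c S.
Proof.
move=> SI SL EI; rewrite /lclosed => Cl; apply/allP => e eE; apply/implyP => Hx.
have eX : e \in ELX L.
  rewrite mem_filter eE andbT.
  have : (e.1 \in I) || (e.2 \in I).
    move: Hx; case E1: (e.1 \in S); case E2: (e.2 \in S) => //= _.
      by rewrite (SI _ E1).
    by rewrite (SI _ E2) orbT.
  by move/(implyP (allP EI e eE)).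
have := implyP (allP Cl (locE L e) (map_f (locE L) eX)).
case: (XME c SL eX) => E0 [E1 E2]; rewrite E0 E1 E2; exact.
Qed.

Lemma XEC (L : seq nat) c (S : seq nat) : {subset S <= L} ->
  Ecnt c S = lcnt (map c L) (map (locE L) (ELX L)) (map (loc L) S).
Proof.
move=> SL.
rewrite /lcnt [RHS](count_map (locE L)).
rewrite [RHS](eq_in_count (a2 := fun e => mono c e && (e.1 \in S) && (e.2 \in S))); last first.
  by move=> e eX /=; case: (XME c SL eX) => -> [-> ->].
rewrite /ELX [RHS]count_filter /Ecnt; apply: eq_count => e /=.
case E1: (e.1 \in S); case E2: (e.2 \in S); rewrite /= ?andbF ?andbT //.
by rewrite (SL _ E1) (SL _ E2) !andbT.
Qed.

Lemma Xlemma c fs d : Hsel c fs -> d \in XD ->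
  (c (dx d) != c (dy d)) || has (free c fs) (dI d) || has (monoface c) (dF d).
Proof.
move=> H dX.
have /and5P[/eqP sL xL yL FL' /and3P[IL CS EI]] := allP XD_ok d dX.
have Hm : map c (dL d) \in allbs 10 by apply: allbs_mem; rewrite size_map sL.
have := allP (allP XD_chk d dX) _ Hm.
rewrite /chkX !locC //.
case/orP => [/orP[-> // | Hf] | Hc].
  by apply/orP; right; apply: Xface Hf.
apply/orP; left; apply/orP; right.
move: Hc => /hasP[S' /mapP[S SC ->] /andP[Cl Lt]].
have /andP[US SI] := allP CS S SC.
have SI' : {subset S <= dI d} by move=> v /(allP SI).
have SL : {subset S <= dL d} by move=> v /SI' /(allP IL).
have Cl' := XCl SI' SL EI Cl.
rewrite size_map -(XEC c SL) in Lt.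
have [v vS fv] := hasP (closed_free H US Cl' Lt).
apply/hasP; exists v; [exact: SI' | exact: fv].
Qed.

Definition YI (j : nat) := iota (4 + 22 * j) 22.
Definition YFs := [:: YF0; YF1; YF2].
Definition xd0 : seq nat * seq nat * nat * nat * seq (nat * nat * nat) * seq (seq nat) :=
  ([::], [::], 0, 0, [::], [::]).

Definition Yok (j : nat) :=
  let d0 := nth xd0 XD (3 * j) in
  let d1 := nth xd0 XD (3 * j + 1) in
  let d2 := nth xd0 XD (3 * j + 2) in
  [&& dy d0 == dx d1, dy d1 == dx d2, dy d2 == dx d0,
      all (fun d => all (fun v => v \in YI j) (dI d) && all (fun f => f \in nth [::] YFs j) (dF d))
        [:: d0; d1; d2] & 3 * j + 2 < size XD].

Lemma Yok_all : all Yok (iota 0 3).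
Proof. by vm_compute. Qed.

Lemma lift_has (A B : seq nat) (p : pred nat) : {subset A <= B} -> has p A -> has p B.
Proof. by move=> AB /hasP[v vA pv]; apply/hasP; exists v => //; apply: AB. Qed.
Lemma lift_hasF (A B : seq (nat * nat * nat)) (p : pred (nat * nat * nat)) :
  {subset A <= B} -> has p A -> has p B.
Proof. by move=> AB /hasP[v vA pv]; apply/hasP; exists v => //; apply: AB. Qed.

Lemma Ylemma c fs j : Hsel c fs -> j < 3 ->
  has (free c fs) (YI j) || has (monoface c) (nth [::] YFs j).
Proof.
move=> H jl.
have := allP Yok_all j; rewrite mem_iota /= => /(_ jl).
rewrite /Yok /= => /and5P[/eqP e1 /eqP e2 /eqP e3 /and4P[/andP[I0 F0] /andP[I1 F1] /andP[I2 F2] _] sz].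
have m0 : nth xd0 XD (3 * j) \in XD by apply: mem_nth; rewrite (_ : size XD = 9) //; lia.
have m1 : nth xd0 XD (3 * j + 1) \in XD by apply: mem_nth; rewrite (_ : size XD = 9) //; lia.
have m2 : nth xd0 XD (3 * j + 2) \in XD by apply: mem_nth; rewrite (_ : size XD = 9) //; lia.
have G : forall d, d \in XD -> all (fun v => v \in YI j) (dI d) ->
    all (fun f => f \in nth [::] YFs j) (dF d) ->
    (c (dx d) != c (dy d)) || (has (free c fs) (YI j) || has (monoface c) (nth [::] YFs j)).
  move=> d dX Id Fd; case/orP: (Xlemma H dX) => [/orP[->//|hf]|hm].
    by rewrite (lift_has (B := YI j) _ hf) ?orbT // => v /(allP Id).
  by rewrite (lift_hasF (B := nth [::] YFs j) _ hm) ?orbT // => v /(allP Fd).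
have G0 := G _ m0 I0 F0; have G1 := G _ m1 I1 F1; have G2 := G _ m2 I2 F2.
move: G0 G1 G2; rewrite -e1 -e2 -e3.
case: (has _ _ || has _ _) => //; rewrite !orbF.
by case: (c (dy (nth xd0 XD (3 * j)))); case: (c (dy (nth xd0 XD (3 * j + 1)))); case: (c (dy (nth xd0 XD (3 * j + 2)))).
Qed.

Lemma iota_split : iota 0 NN = iota 0 4 ++ (YI 0 ++ (YI 1 ++ YI 2)).
Proof. by []. Qed.

Lemma core_contra c fs : Hsel c fs -> False.
Proof.
move=> H.
have h1 := count_mono_le H.
have h2 := sum_mf c.
have h3 := sum_mf_ge c FL.
rewrite FL_size in h3.
have Y0 : has (free c fs) (YI 0) || has (monoface c) YF0 := Ylemma H (isT : 0 < 3).
have Y1 : has (free c fs) (YI 1) || has (monoface c) YF1 := Ylemma H (isT : 1 < 3).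
have Y2 : has (free c fs) (YI 2) || has (monoface c) YF2 := Ylemma H (isT : 2 < 3).
rewrite iota_split !count_cat in h1.
rewrite {1}/FL (count_cat _ YF0) (count_cat _ YF1) (count_cat _ YF2) in h3.
move: Y0 Y1 Y2; rewrite !has_count.
rewrite /NN in h1.
set m := count (mono c) EL in h1 h2.
rewrite h2 in h3.
set a0 := count (free c fs) (YI 0) in h1 *.
set a1 := count (free c fs) (YI 1) in h1 *.
set a2 := count (free c fs) (YI 2) in h1 *.
set b0 := count (monoface c) YF0 in h3 *.
set b1 := count (monoface c) YF1 in h3 *.
set b2 := count (monoface c) YF2 in h3 *.
move=> /orP[Y0|Y0] /orP[Y1|Y1] /orP[Y2|Y2]; lia.
Qed.

Definition cx (a : nat) : Z := nth 0%Z CX a.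
Definition cy (a : nat) : Z := nth 0%Z CY a.
Definition pt (a : nat) : Z * Z := (cx a, cy a).
Definition zsub (p q : Z * Z) : Z * Z := ((p.1 - q.1)%Z, (p.2 - q.2)%Z).
Definition zcross (p q : Z * Z) : Z := (p.1 * q.2 - p.2 * q.1)%Z.
Definition zdot (p q : Z * Z) : Z := (p.1 * q.1 + p.2 * q.2)%Z.

Definition segchk (p0 p1 q0 q1 : Z * Z) : bool :=
  let d1 := zsub p1 p0 in let d2 := zsub q1 q0 in let w := zsub q0 p0 in
  let det := zcross d1 d2 in let ns := zcross w d2 in let nt := zcross w d1 in
  if Z.eqb det 0 then negb (Z.eqb nt 0)
  else if Z.ltb 0 det then
    negb (Z.ltb 0 ns && Z.ltb ns det && Z.ltb 0 nt && Z.ltb nt det)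
  else negb (Z.ltb ns 0 && Z.ltb det ns && Z.ltb nt 0 && Z.ltb det nt).

Definition ptchk (w p0 p1 : Z * Z) : bool :=
  let d := zsub p1 p0 in let u := zsub w p0 in
  Z.ltb 0 (zdot d d) &&
  (negb (Z.eqb (zcross u d) 0) || negb (Z.ltb 0 (zdot u d) && Z.ltb (zdot u d) (zdot d d))).

Definition rpt (p : Z * Z) : R * R := (IZR p.1, IZR p.2).
Definition lerp (P Q : R * R) (t : R) : R * R :=
  ((fst P + t * (fst Q - fst P))%R, (snd P + t * (snd Q - snd P))%R).

Local Open Scope R_scope.

Lemma lin_solve (x0 y0 x1 y1 a0 b0 a1 b1 s t : R) :
  x0 + s * (x1 - x0) = a0 + t * (a1 - a0) ->
  y0 + s * (y1 - y0) = b0 + t * (b1 - b0) ->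
  s * ((x1 - x0) * (b1 - b0) - (y1 - y0) * (a1 - a0)) = (a0 - x0) * (b1 - b0) - (b0 - y0) * (a1 - a0) /\
  t * ((x1 - x0) * (b1 - b0) - (y1 - y0) * (a1 - a0)) = (a0 - x0) * (y1 - y0) - (b0 - y0) * (x1 - x0).
Proof.
move=> ex ey.
have e1 : s * (x1 - x0) - t * (a1 - a0) = a0 - x0 by lra.
have e2 : s * (y1 - y0) - t * (b1 - b0) = b0 - y0 by lra.
split.
- transitivity ((s * (x1 - x0) - t * (a1 - a0)) * (b1 - b0) - (s * (y1 - y0) - t * (b1 - b0)) * (a1 - a0)); first ring.
  by rewrite e1 e2.
- transitivity ((s * (x1 - x0) - t * (a1 - a0)) * (y1 - y0) - (s * (y1 - y0) - t * (b1 - b0)) * (x1 - x0)); first ring.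
  by rewrite e1 e2.
Qed.

Lemma IZR_cross (p q : Z * Z) : IZR (zcross p q) = IZR p.1 * IZR q.2 - IZR p.2 * IZR q.1.
Proof. by rewrite /zcross minus_IZR !mult_IZR. Qed.
Lemma IZR_dot (p q : Z * Z) : IZR (zdot p q) = IZR p.1 * IZR q.1 + IZR p.2 * IZR q.2.
Proof. by rewrite /zdot plus_IZR !mult_IZR. Qed.
Lemma IZR_sub1 (p q : Z * Z) : IZR (zsub p q).1 = IZR p.1 - IZR q.1.
Proof. by rewrite /zsub /= minus_IZR. Qed.
Lemma IZR_sub2 (p q : Z * Z) : IZR (zsub p q).2 = IZR p.2 - IZR q.2.
Proof. by rewrite /zsub /= minus_IZR. Qed.

Lemma segchk_ok p0 p1 q0 q1 s t : segchk p0 p1 q0 q1 = true -> 0 < s < 1 -> 0 < t < 1 ->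
  lerp (rpt p0) (rpt p1) s <> lerp (rpt q0) (rpt q1) t.
Proof.
move=> C hs ht E; case: E => ex ey.
have [Hs Ht] := lin_solve ex ey.
move: C; rewrite /segchk; cbv zeta.
set det := zcross (zsub p1 p0) (zsub q1 q0).
set ns := zcross (zsub q0 p0) (zsub q1 q0).
set nt := zcross (zsub q0 p0) (zsub p1 p0).
have Rdet : IZR det = (IZR p1.1 - IZR p0.1) * (IZR q1.2 - IZR q0.2) - (IZR p1.2 - IZR p0.2) * (IZR q1.1 - IZR q0.1).
  by rewrite /det IZR_cross !IZR_sub1 !IZR_sub2.
have Rns : IZR ns = (IZR q0.1 - IZR p0.1) * (IZR q1.2 - IZR q0.2) - (IZR q0.2 - IZR p0.2) * (IZR q1.1 - IZR q0.1).
  by rewrite /ns IZR_cross !IZR_sub1 !IZR_sub2.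
have Rnt : IZR nt = (IZR q0.1 - IZR p0.1) * (IZR p1.2 - IZR p0.2) - (IZR q0.2 - IZR p0.2) * (IZR p1.1 - IZR p0.1).
  by rewrite /nt IZR_cross !IZR_sub1 !IZR_sub2.
rewrite /rpt /= in Hs Ht.
rewrite -Rdet -Rns in Hs; rewrite -Rdet -Rnt in Ht.
case: (Z.eqb_spec det 0) => [D0|Dn].
  rewrite D0 in Ht; move=> /negP; apply; apply/Z.eqb_eq; apply: eq_IZR.
  by rewrite -Ht Rmult_0_r.
case: (Z.ltb_spec 0 det) => [Dp|Dn'].
  have Dr : 0 < IZR det by apply: IZR_lt.
  have a1 : 0 < IZR ns by rewrite -Hs; nra.
  have a2 : IZR ns < IZR det by rewrite -Hs; nra.
  have a3 : 0 < IZR nt by rewrite -Ht; nra.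
  have a4 : IZR nt < IZR det by rewrite -Ht; nra.
  move/lt_IZR: a1 => /Z.ltb_lt ->; move/lt_IZR: a2 => /Z.ltb_lt ->.
  by move/lt_IZR: a3 => /Z.ltb_lt ->; move/lt_IZR: a4 => /Z.ltb_lt ->.
have Dr : IZR det < 0.
  apply: IZR_lt; lia.
have a1 : IZR ns < 0 by rewrite -Hs; nra.
have a2 : IZR det < IZR ns by rewrite -Hs; nra.
have a3 : IZR nt < 0 by rewrite -Ht; nra.
have a4 : IZR det < IZR nt by rewrite -Ht; nra.
move/lt_IZR: a1 => /Z.ltb_lt ->; move/lt_IZR: a2 => /Z.ltb_lt ->.
by move/lt_IZR: a3 => /Z.ltb_lt ->; move/lt_IZR: a4 => /Z.ltb_lt ->.
Qed.

Lemma ptchk_ok w p0 p1 s : ptchk w p0 p1 = true -> 0 < s < 1 ->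
  lerp (rpt p0) (rpt p1) s <> rpt w.
Proof.
move=> C hs E; case: E => ex ey.
move: C; rewrite /ptchk; cbv zeta.
set d := zsub p1 p0; set u := zsub w p0.
have Rd1 : IZR d.1 = IZR p1.1 - IZR p0.1 by rewrite IZR_sub1.
have Rd2 : IZR d.2 = IZR p1.2 - IZR p0.2 by rewrite IZR_sub2.
have Ru1 : IZR u.1 = s * IZR d.1 by rewrite IZR_sub1 Rd1 -ex; ring.
have Ru2 : IZR u.2 = s * IZR d.2 by rewrite IZR_sub2 Rd2 -ey; ring.
have Cr : IZR (zcross u d) = 0 by rewrite IZR_cross Ru1 Ru2; ring.
have Dt : IZR (zdot u d) = s * IZR (zdot d d) by rewrite !IZR_dot Ru1 Ru2; ring.
case/andP => /Z.ltb_lt Dp.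
have Dr : 0 < IZR (zdot d d) by apply: IZR_lt.
have -> : Z.eqb (zcross u d) 0 = true by apply/Z.eqb_eq; apply: eq_IZR.
have a1 : 0 < IZR (zdot u d) by rewrite Dt; nra.
have a2 : IZR (zdot u d) < IZR (zdot d d) by rewrite Dt; nra.
by move/lt_IZR: a1 => /Z.ltb_lt ->; move/lt_IZR: a2 => /Z.ltb_lt ->.
Qed.

Lemma lerp_sym P Q t : lerp P Q t = lerp Q P (1 - t).
Proof. rewrite /lerp; f_equal; ring. Qed.

Lemma lerp_inj P Q s t : P <> Q -> lerp P Q s = lerp P Q t -> s = t.
Proof.
case: P => px py; case: Q => qx qy /= PQ [ex ey].
case: (Req_dec s t) => // st.
exfalso; apply: PQ.
have h1 : (s - t) * (qx - px) = 0 by lra.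
have h2 : (s - t) * (qy - py) = 0 by lra.
case: (Rmult_integral _ _ h1) => h1'; first by lra.
case: (Rmult_integral _ _ h2) => h2'; first by lra.
f_equal; lra.
Qed.

Lemma lerp_bnd (y0 y1 M t : R) : y0 <= M -> y1 <= M -> 0 < t < 1 -> y0 + t * (y1 - y0) <= M.
Proof. move=> h0 h1 ht; nra. Qed.

Local Close Scope R_scope.

Lemma seg_all : all (fun e => all (fun e' => (e == e') || segchk (pt e.1) (pt e.2) (pt e'.1) (pt e'.2)) EL) EL.
Proof. by vm_compute. Qed.

Lemma pt_all : all (fun w => all (fun e => ptchk (pt w) (pt e.1) (pt e.2)) EL) (iota 0 NN).
Proof. by vm_compute. Qed.

Definition zpeq (p q : Z * Z) := Z.eqb p.1 q.1 && Z.eqb p.2 q.2.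
Lemma pt_distinct : all (fun a => all (fun b => (a == b) || ~~ zpeq (pt a) (pt b)) (iota 0 NN)) (iota 0 NN).
Proof. by vm_compute. Qed.

Lemma pt_inj a b : a < NN -> b < NN -> pt a = pt b -> a = b.
Proof.
move=> ha hb E.
have := allP (allP pt_distinct a _) b _.
rewrite !mem_iota /= ha hb => /(_ erefl erefl).
case/orP => [/eqP // | ]; rewrite /zpeq E !Z.eqb_refl //.
Qed.

Lemma cy_bnd : all (fun a => Z.leb (cy a) 100000) (iota 0 NN).
Proof. by vm_compute. Qed.

Definition adj0 (a b : nat) : bool := ((a, b) \in EL) || ((b, a) \in EL).
Definition VV (i : nat) : finType := ('I_NN + 'I_i)%type.
Definition gadj (i : nat) (u v : VV i) : bool :=
  match u, v with inl a, inl b => adj0 a b | _, _ => false end.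

Lemma gadj_sym i : symmetric (gadj (i := i)).
Proof. by case=> [a|a] [b|b] //=; rewrite /adj0 orbC. Qed.

Lemma EL_irr a : (a, a) \in EL = false.
Proof. by apply/negP => /EL_lt /=; rewrite ltnn. Qed.

Lemma gadj_irr i : irreflexive (gadj (i := i)).
Proof. by case=> [a|a] //=; rewrite /adj0 EL_irr. Qed.

Definition GG (i : nat) : sgraph := SGraph (VV i) (@gadj i) (@gadj_sym i) (@gadj_irr i).

Lemma noniso i j : i <> j -> ~ isomorphic (GG i) (GG j).
Proof.
move=> ij [phi [bij _]]; apply: ij.
have := bij_eq_card bij; rewrite /= !card_sum !card_ord; lia.
Qed.

Definition pos (i : nat) (v : VV i) : R * R :=
  match v with
  | inl a => rpt (pt a)
  | inr k => ((INR k + 300000)%R, 300000%R)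
  end.
Definition gg (i : nat) (u v : VV i) (t : R) : R * R := lerp (pos u) (pos v) t.

Lemma rpt_inj p q : rpt p = rpt q -> p = q.
Proof.
case: p => p1 p2; case: q => q1 q2; rewrite /rpt /= => [[/eq_IZR -> /eq_IZR ->]] //.
Qed.

Lemma cy_le (a : 'I_NN) : (IZR (cy a) <= 100000)%R.
Proof.
have := allP cy_bnd a; rewrite mem_iota /= ltn_ord => /(_ isT) /Z.leb_le h.
by apply: IZR_le.
Qed.

Lemma pos_inj i : injective (@pos i).
Proof.
case=> [a|k] [b|k'] /=.
- move=> /rpt_inj /(pt_inj (ltn_ord a) (ltn_ord b)) h; congr inl; exact: val_inj.
- case=> _ h; have := cy_le a; rewrite /pt /= in h; rewrite h; lra.
- case=> _ h; have := cy_le b; rewrite /pt /= in h; rewrite -h; lra.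
- move=> [h]; congr inr; apply: ord_inj; apply: INR_eq; lra.
Qed.

Lemma adj0_EL (a b : nat) : adj0 a b -> exists e, e \in EL /\ ((e = (a, b)) \/ (e = (b, a))).
Proof.
by rewrite /adj0 => /orP[h|h]; [exists (a, b); split => //; left | exists (b, a); split => //; right].
Qed.

Lemma orient (a b : 'I_NN) (t : R) : adj0 a b -> (0 < t < 1)%R ->
  exists e t', e \in EL /\ (0 < t' < 1)%R /\
    lerp (rpt (pt a)) (rpt (pt b)) t = lerp (rpt (pt e.1)) (rpt (pt e.2)) t' /\
    ((e = (val a, val b)) \/ (e = (val b, val a))).
Proof.
move=> /adj0_EL [e [eE [Ee|Ee]]] ht; subst e.
  by exists (val a, val b), t; split => //; split => //; split => //; left.
exists (val b, val a), (1 - t)%R; split => //; split; first lra.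
by split; [rewrite lerp_sym | right].
Qed.

Lemma gadj_inl i (u v : VV i) : gadj u v -> exists a b : 'I_NN, u = inl a /\ v = inl b /\ adj0 a b.
Proof. by case: u v => [a|a] [b|b] //= h; exists a, b. Qed.

Lemma planar_Gs i : planar (GG i).
Proof.
exists (@pos i), (@gg i); split; [exact: pos_inj | split; [|split]].
- move=> u v /= huv.
  have uv : pos u <> pos v.
    by move=> /pos_inj E; move: huv; rewrite E gadj_irr.
  split; last split; last split.
  + split; [rewrite /gg /lerp /=; reg | split; [rewrite /gg /lerp /=; reg|]].
    move=> s t _ _; exact: lerp_inj.
  + by rewrite /gg /lerp /=; case: (pos u) => x y /=; congr pair; ring.
  + by rewrite /gg /lerp /=; case: (pos u) => x y; case: (pos v) => x' y' /=; congr pair; ring.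
  + by move=> t; rewrite /gg lerp_sym.
- move=> u v w t /= huv ht.
  have [a [b [-> [-> hab]]]] := gadj_inl huv.
  rewrite /gg /=.
  have [e [t' [eE [ht' [-> _]]]]] := orient hab ht.
  case: w => [c|k] /=.
    apply: ptchk_ok ht'.
    have H1 : nat_of_ord c \in iota 0 NN by rewrite mem_iota /= ltn_ord.
    exact: (allP (allP pt_all _ H1) e eE).
  rewrite /lerp /= => [[_ h]].
  have hb1 : (IZR (cy e.1) <= 100000)%R.
    have := allP cy_bnd e.1; rewrite mem_iota /= => /(_ (ltn_trans (EL_lt eE) (EL_bnd eE))) /Z.leb_le.
    by move/IZR_le.
  have hb2 : (IZR (cy e.2) <= 100000)%R.
    have := allP cy_bnd e.2; rewrite mem_iota /= => /(_ (EL_bnd eE)) /Z.leb_le.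
    by move/IZR_le.
  have := lerp_bnd hb1 hb2 ht'; rewrite /pt /= in h; rewrite h; lra.
- move=> u v u' v' s t /= huv hu'v' Hne hs ht.
  have [a [b [Eu [Ev hab]]]] := gadj_inl huv.
  have [a' [b' [Eu' [Ev' hab']]]] := gadj_inl hu'v'.
  subst u v u' v'.
  rewrite /gg /=.
  have [e [s' [eE [hs' [-> Ee]]]]] := orient hab hs.
  have [e' [t' [eE' [ht' [-> Ee']]]]] := orient hab' ht.
  have ne : e != e'.
    apply/eqP => Eq; apply: Hne; subst e'.
    case: Ee => E1; case: Ee' => E2; rewrite E1 in E2; case: E2 => /ord_inj h1 /ord_inj h2;
      subst; by [left; split | right; split].
  apply: segchk_ok hs' ht'.
  have := allP (allP seg_all e eE) e' eE'; by rewrite (negbTE ne).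
Qed.

Definition fsel (a : nat) : option nat := nth None FSEL a.
Definition col3 (a : nat) : nat := nth 0 COL3 a.

Lemma col_ok : all (fun e => (col3 e.1 != col3 e.2) || (fsel e.1 == Some e.2) || (fsel e.2 == Some e.1)) EL.
Proof. by vm_compute. Qed.
Lemma col_bnd : all (fun a => col3 a < 3) (iota 0 NN).
Proof. by vm_compute. Qed.
Lemma fsel_ok : all (fun a => if fsel a is Some b then (b < NN) && adj0 a b else true) (iota 0 NN).
Proof. by vm_compute. Qed.

Definition f0 (i : nat) (v : VV i) : option (VV i) :=
  match v with
  | inl a => if fsel a is Some b then Some (inl (@inord 69 b)) else None
  | inr _ => None
  end.

Definition c3 (i : nat) (v : VV i) : 'I_3 :=
  match v with inl a => @inord 2 (col3 a) | inr _ => ord0 end.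

Lemma f0_sel i : @one_selection (GG i) (@f0 i).
Proof.
case=> [a|k] w //=.
have := allP fsel_ok a; rewrite mem_iota /= ltn_ord => /(_ isT).
case: (fsel a) => // b /andP[bN hab] [<-] /=.
by rewrite inordK.
Qed.

Lemma c3_proper i : proper_coloring (@adj_del (GG i) (@f0 i)) (@c3 i).
Proof.
case=> [a|k] [b|k'] //=; rewrite /adj_del /= => /andP[hab hn].
have [e [eE Ee]] := adj0_EL hab.
have CO := allP col_ok e eE.
have ca := allP col_bnd a; have cb := allP col_bnd b.
rewrite !mem_iota /= !ltn_ord in ca cb.
have fa : fsel a = Some (nat_of_ord b) -> False.
  move=> E; move: hn; rewrite /f0 E /= (_ : @inord 69 b = b) //; last exact: inord_val.
  by rewrite eqxx.
have fb : fsel b = Some (nat_of_ord a) -> False.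
  move=> E; move: hn; rewrite /f0 E /= (_ : @inord 69 a = a) //; last exact: inord_val.
  by rewrite eqxx orbT.
have K : (col3 a != col3 b) || (fsel a == Some (nat_of_ord b)) || (fsel b == Some (nat_of_ord a)).
  move: CO; case: Ee => -> /=; first by [].
  move=> /orP[/orP[H|H]|H]; apply/orP.
  - by left; apply/orP; left; rewrite eq_sym.
  - by right.
  - by left; apply/orP; right.
move: K => /orP[/orP[Hc|/eqP E]|/eqP E]; [ | by case: (fa E) | by case: (fb E)].
move=> Eq; move/(congr1 (@nat_of_ord _)): Eq; rewrite !inordK ?ca ?cb // => Eq.
by rewrite Eq eqxx in Hc.
Qed.

Lemma LB i (f : GG i -> option (GG i)) j : @one_selection (GG i) f -> colorable (@adj_del (GG i) f) j -> 3 <= j.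
Proof.
move=> fsl [c Pc]; rewrite leqNgt; apply/negP => jl.
pose cb (n : nat) := nat_of_ord (c (inl (@inord 69 n))) == 0.
pose fs (n : nat) : option nat :=
  match f (inl (@inord 69 n)) with Some (inl w) => Some (nat_of_ord w) | _ => None end.
apply: (@core_contra cb fs) => e eE me.
have l1 := EL_lt eE; have l2 := EL_bnd eE.
have l1' : e.1 < 70 by exact: ltn_trans l1 l2.
set u : VV i := inl (@inord 69 e.1).
set w : VV i := inl (@inord 69 e.2).
have huw : gadj u w by rewrite /= /adj0 !inordK // -surjective_pairing eE.
have cuw : c u = c w.
  apply: ord_inj; move: me; rewrite /mono /cb -/u -/w.
  have := ltn_ord (c u); have := ltn_ord (c w).
  case: (nat_of_ord (c u)) => [|[|x]]; case: (nat_of_ord (c w)) => [|[|y]] //= *; lia.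
have : adj_del f u w = false.
  by apply/negP => /Pc.
have huw2 : adj (GG i) u w := huw.
rewrite /adj_del huw2 /= => /negbFE /orP[/eqP E|/eqP E].
  by left; rewrite /fs -/u E /= inordK.
by right; rewrite /fs -/w E /= inordK.
Qed.

Lemma rcn_Gs i : robust_chromatic_number (GG i) 3.
Proof.
split.
  exists (@f0 i); split; first exact: f0_sel.
  split; first by exists (@c3 i); exact: c3_proper.
  move=> j; exact: LB (@f0_sel i).
move=> f j fsl [cj _]; exact: LB fsl cj.
Qed.

Theorem theorem1p3 :
  exists Gs : nat -> sgraph,
    (forall i, planar (Gs i) /\ robust_chromatic_number (Gs i) 3) /\
    (forall i j, i <> j -> ~ isomorphic (Gs i) (Gs j)).
Proof.
exists GG; split; last exact: noniso.
by move=> i; split; [exact: planar_Gs | exact: rcn_Gs].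
Qed.
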